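(* Let $X$ be a locally convex Hausdorff space which has a predual $(Y,\varphi)$ with $Y$ quasi-barrelled. Then the map $\Phi_\varphi\colon Y\to X_b'$, $y\mapsto[x\mapsto\varphi(x)(y)]$, is a topological isomorphism onto its range.
   Context: For a locally convex Hausdorff space $Z$, $Z_b'$ denotes its dual equipped with the topology of uniform convergence on bounded subsets of $Z$ (strong dual). A predual of $X$ is a pair $(Y,\varphi)$ of a locally convex Hausdorff space $Y$ and a topological isomorphism $\varphi\colon X\to Y_b'$. *)

(* Defs.v *)
(* MathComp + MathComp-Analysis (tvs.v: tvsType = locally convex tvs). *)
From mathcomp Require Import all_boot all_order all_algebra.
From mathcomp Require Import all_classical all_reals all_analysis.
From mathcomp Require Import complex.
Import numFieldNormedType.Exports.

Set Implicit Arguments.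
Unset Strict Implicit.
Unset Printing Implicit Defensive.
Import Order.TTheory GRing.Theory Num.Theory.
Local Open Scope classical_set_scope.
Local Open Scope ring_scope.

Definition RC (R : realType) (b : bool) : numFieldType :=
  if b then (R : numFieldType) else ((R[i])%C : numFieldType).

Section lcs_notions.
Context {K : numFieldType}.

Definition absorbs (E : tvsType K) (U B : set E) : Prop :=
  exists2 r : K, 0 < r & forall l : K, r <= `|l| -> B `<=` [set l *: u | u in U].

Definition tvs_bounded (E : tvsType K) (B : set E) : Prop :=
  forall U : set E, nbhs (0 : E) U -> absorbs U B.

Definition absorbing (E : tvsType K) (U : set E) : Prop :=
  forall x : E, absorbs U [set x].

Definition balanced (E : tvsType K) (U : set E) : Prop :=
  forall l : K, `|l| <= 1 -> [set l *: u | u in U] `<=` U.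

Definition absolutely_convex (E : tvsType K) (U : set E) : Prop :=
  @convex_set K E U /\ balanced U.

Definition barrel (E : tvsType K) (U : set E) : Prop :=
  [/\ closed U, absolutely_convex U & absorbing U].

Definition bornivorous (E : tvsType K) (U : set E) : Prop :=
  forall B : set E, tvs_bounded B -> absorbs U B.

Definition quasi_barrelled (E : tvsType K) : Prop :=
  forall U : set E, barrel U -> bornivorous U -> nbhs (0 : E) U.

Definition cont_linear (E : tvsType K) (f : E -> K) : Prop :=
  (forall (a : K) (x y : E), f (a *: x + y) = a * f x + f y) /\ continuous f.

(* open subsets of the strong dual E_b' (topology of uniform convergence on
   bounded subsets of E), viewed as subsets of the set of continuous linear
   functionals E -> K. *)
Definition strong_open (E : tvsType K) (V : set (E -> K)) : Prop :=
  V `<=` @cont_linear E /\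
  forall f, V f -> exists B : set E, tvs_bounded B /\
    exists2 e : K, 0 < e &
      [set g | cont_linear g /\ forall y, B y -> `|g y - f y| < e] `<=` V.

Definition top_iso_onto_range (E F : tvsType K) (T : E -> (F -> K)) : Prop :=
  [/\ forall x, cont_linear (T x),
      forall (a : K) (x y : E) (z : F), T (a *: x + y) z = a * T x z + T y z,
      injective T,
      forall V, strong_open V -> open (T @^-1` V)
    & forall U : set E, open U ->
        exists V, strong_open V /\ T @` U = V `&` range T].

Definition top_iso_dual (E F : tvsType K) (T : E -> (F -> K)) : Prop :=
  top_iso_onto_range T /\ (forall f, cont_linear f -> exists x, T x = f).

End lcs_notions.

(* Main.v *)
Require Import Defs.
From mathcomp Require Import all_boot all_order all_algebra.
From mathcomp Require Import all_classical all_reals all_analysis.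
From mathcomp Require Import complex.
From mathcomp Require Import ring lra.
Set Implicit Arguments.
Unset Strict Implicit.
Unset Printing Implicit Defensive.

Section chunk1.
Import Order.TTheory GRing.Theory Num.Theory.
Local Open Scope classical_set_scope.
Local Open Scope ring_scope.

Section RealHB.
Variables (R : realType) (V : zmodType) (sc : R -> V -> V).
Hypotheses (scD : forall a x y, sc a (x + y) = sc a x + sc a y)
  (scDl : forall a b x, sc (a + b) x = sc a x + sc b x)
  (scA : forall a b x, sc a (sc b x) = sc (a * b) x)
  (sc1 : forall x, sc 1 x = x).

Lemma sc0 x : sc 0 x = 0.
Proof. by apply: (@addrI _ (sc 0 x)); rewrite -scDl !addr0. Qed.
Lemma scx0 a : sc a 0 = 0.
Proof. by rewrite -(sc0 0) scA mulr0. Qed.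
Lemma scN1 x : sc (-1) x = - x.
Proof. by apply: (@addrI _ x); rewrite subrr -{1}(sc1 x) -scDl subrr sc0. Qed.
Lemma scN a x : sc (- a) x = - sc a x.
Proof. by rewrite -mulN1r -scA scN1. Qed.

Variable p : V -> R.
Hypotheses (p_sub : forall x y, p (x + y) <= p x + p y)
  (p_hom : forall a x, 0 <= a -> p (sc a x) = a * p x).

Lemma p0 : p 0 = 0.
Proof. by rewrite -(sc0 0) p_hom // mul0r. Qed.

Variable y : V.

Definition lin_graph (G : set (V * R)) :=
  [/\ forall x a x' a' t, G (x, a) -> G (x', a') -> G (sc t x + x', t * a + a'),
      forall x a, G (x, a) -> a <= p x & G (y, p y)].

Lemma lg0 G : lin_graph G -> G (0, 0).
Proof.
case=> Hc _ Hy; have := Hc _ _ _ _ (-1) Hy Hy.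
by rewrite scN1 addNr mulN1r addNr.
Qed.

Lemma lg_fun G x a b : lin_graph G -> G (x, a) -> G (x, b) -> a = b.
Proof.
move=> [Hc Hb Hy] Ha Hb'.
have h1 := Hb _ _ (Hc _ _ _ _ (-1) Ha Hb').
have h2 := Hb _ _ (Hc _ _ _ _ (-1) Hb' Ha).
rewrite scN1 addNr p0 mulN1r in h1 h2.
by apply/eqP; rewrite eq_le; apply/andP; split; rewrite -subr_ge0 addrC ?opprB;
  [move: h2|move: h1]; rewrite -subr_le0 ?opprB; lra.
Qed.

Lemma lg_chain (F : set (set (V * R))) : F !=set0 ->
  (forall G, F G -> lin_graph G) -> total_on F subset ->
  lin_graph (\bigcup_(G in F) G).
Proof.
move=> [G0 FG0] Flin tot; split.
- move=> x a x' a' t [G1 FG1 G1a] [G2 FG2 G2a].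
  have [G12|G21] := tot _ _ FG1 FG2.
    exists G2 => //; have [Hc _ _] := Flin _ FG2; exact: Hc (G12 _ G1a) G2a.
  exists G1 => //; have [Hc _ _] := Flin _ FG1; exact: Hc G1a (G21 _ G2a).
- by move=> x a [G FG Ga]; have [_ Hb _] := Flin _ FG; exact: Hb.
- by exists G0 => //; have [_ _ Hy] := Flin _ FG0.
Qed.

Lemma lg_extend G z : lin_graph G -> ~ (exists a, G (z, a)) ->
  exists G', lin_graph G' /\ G `<` G'.
Proof.
move=> lG nz; have [Hc Hb Hy] := lG.
have G00 := lg0 lG.
pose S := [set r | exists x a, G (x, a) /\ r = a - p (x - z)].
have S0 : S !=set0 by exists (0 - p (0 - z)); exists 0, 0.
have ub : forall x' a', G (x', a') -> ubound S (p (x' + z) - a').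
  move=> x' a' Gx' _ [x [a [Ga ->]]].
  have := Hb _ _ (Hc _ _ _ _ 1 Ga Gx'); rewrite sc1 mul1r => h.
  have := p_sub (x - z) (x' + z); rewrite addrACA addNr addr0 => h2.
  lra.
have hS : has_sup S by split => //; exists (p (0 + z) - 0); exact: ub.
pose c := sup S.
have cle : forall x' a', G (x', a') -> c <= p (x' + z) - a'.
  by move=> x' a' Gx'; apply: ge_sup => //; exact: ub.
have gec : forall x a, G (x, a) -> a - p (x - z) <= c.
  by move=> x a Ga; apply: sup_upper_bound => //; exists x, a.
pose G' := [set wr | exists x a t, G (x, a) /\ wr = (x + sc t z, a + t * c)].
exists G'; split; last first.
  split; first by move=> [x a] Ga; exists x, a, 0; rewrite sc0 addr0 mul0r addr0.
  move=> GG'; apply: nz; exists c; apply: GG'; exists 0, 0, 1.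
  by rewrite sc1 add0r mul1r add0r.
split.
- move=> _ _ _ _ t [x1 [a1 [t1 [G1 [-> ->]]]]] [x2 [a2 [t2 [G2 [-> ->]]]]].
  exists (sc t x1 + x2), (t * a1 + a2), (t * t1 + t2); split; first exact: Hc.
  congr pair; last by ring.
  by rewrite scD scDl -scA; rewrite -!addrA; congr (_ + _); rewrite addrCA.
- move=> _ _ [x [a [t [Ga [-> ->]]]]].
  have : [\/ t < 0, 0 < t | t = 0].
    by case: (ltgtP t 0) => h; [apply: Or31|apply: Or32|apply: Or33].
  case=> [t0|t0|->]; last by rewrite sc0 addr0 mul0r addr0; exact: Hb.
  + have s0 : 0 < - t by rewrite oppr_gt0.
    have := gec _ _ (Hc _ _ _ _ (- t)^-1 Ga G00).
    rewrite !addr0 => h.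
    have e : x + sc t z = sc (- t) (sc (- t)^-1 x - z).
      by rewrite scD scA mulrV ?unitfE ?lt0r_neq0 // sc1 -scN1 scA mulrN1 opprK.
    rewrite e p_hom; last exact: ltW.
    have h3 := ler_wpM2l (ltW s0) h.
    rewrite mulrBr mulrA mulrV ?unitfE ?lt0r_neq0 // mul1r in h3.
    move: h3; set P := p _; move=> h3; lra.
  + have := cle _ _ (Hc _ _ _ _ t^-1 Ga G00).
    rewrite !addr0 => h.
    have e : x + sc t z = sc t (sc t^-1 x + z).
      by rewrite scD scA mulrV ?unitfE ?lt0r_neq0 // sc1.
    rewrite e p_hom; last exact: ltW.
    have h3 := ler_wpM2l (ltW t0) h.
    rewrite mulrBr mulrA mulrV ?unitfE ?lt0r_neq0 // mul1r in h3.
    move: h3; set P := p _; move=> h3; lra.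
- by exists y, (p y), 0; rewrite sc0 addr0 mul0r addr0.
Qed.

End RealHB.

End chunk1.

Section chunk2.
Import Order.TTheory GRing.Theory Num.Theory.
Local Open Scope classical_set_scope.
Local Open Scope ring_scope.

Lemma zorn_ne T (P : set (set T)) (G0 : set T) : P G0 -> G0 !=set0 ->
  (forall F, F `<=` P -> F !=set0 -> total_on F subset -> P (\bigcup_(X in F) X)) ->
  exists A, P A /\ forall B, A `<` B -> ~ P B.
Proof.
move=> PG0 [g0 Gg0] Hch.
pose P' := fun A => P A \/ A = set0.
have [|A [P'A Amax]] := @Zorn_bigcup T P'.
  move=> F FP' tot.
  pose F' := [set A | F A /\ P A].
  have e : \bigcup_(X in F) X = \bigcup_(X in F') X.
    apply/seteqP; split => x [X FX Xx].
      exists X => //; split => //; case: (FP' _ FX) => // X0.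
      by rewrite X0 in Xx.
    by exists X => //; case: FX.
  have [F'0|F'n0] := eqVneq F' set0.
    right; rewrite e F'0; exact: bigcup_set0.
  left; rewrite e; apply: Hch.
  - by move=> X [].
  - exact/set0P.
  - by move=> X Y [FX _] [FY _]; exact: tot.
exists A; split; last by move=> B AB PB; apply: (Amax B AB); left.
case: P'A => // A0; exfalso; apply: (Amax G0); last by left.
rewrite A0; split; first exact: sub0set.
by move=> /(_ g0 Gg0).
Qed.

Section RealHB2.
Variables (R : realType) (V : zmodType) (sc : R -> V -> V).
Hypotheses (scD : forall a x y, sc a (x + y) = sc a x + sc a y)
  (scDl : forall a b x, sc (a + b) x = sc a x + sc b x)
  (scA : forall a b x, sc a (sc b x) = sc (a * b) x)
  (sc1 : forall x, sc 1 x = x).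
Variable p : V -> R.
Hypotheses (p_sub : forall x y, p (x + y) <= p x + p y)
  (p_hom : forall a x, 0 <= a -> p (sc a x) = a * p x).

Lemma real_HB (y : V) : exists u : V -> R,
  [/\ forall t x x', u (sc t x + x') = t * u x + u x',
      forall x, u x <= p x & u y = p y].
Proof.
pose G0 := [set wr | exists t, wr = (sc t y, t * p y)].
have lG0 : lin_graph sc p y G0.
  split.
  - move=> _ _ _ _ t [t1 [-> ->]] [t2 [-> ->]].
    exists (t * t1 + t2); rewrite scDl scA; congr pair; ring.
  - move=> _ _ [t [-> ->]].
    have [t0|t0] := leP 0 t; first by rewrite p_hom.
    have h := p_sub (sc t y) (sc (- t) y).
    rewrite -scDl addrN (sc0 scDl) (p0 scDl p_hom) (@p_hom (- t) y) in h; last first.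
      by rewrite oppr_ge0 ltW.
    lra.
  - by exists 1; rewrite sc1 mul1r.
have [G [lG Gmax]] := @zorn_ne _ (lin_graph sc p y) G0 lG0
  (ex_intro _ (y, p y) (ex_intro _ 1 (congr2 pair (esym (sc1 y)) (esym (mul1r _))))) 
  (fun F FP Fn0 tot => lg_chain Fn0 FP tot).
have tot : forall z, exists a, G (z, a).
  move=> z; apply: contrapT => nz.
  have [G' [lG' GG']] := lg_extend scD scDl scA sc1 p_sub p_hom lG nz.
  exact: Gmax GG' lG'.
have [u hu] := choice tot.
have [Hc Hb Hy] := lG.
exists u; split.
- move=> t x x'; apply: (lg_fun scDl sc1 p_hom lG (hu _)).
  exact: Hc.
- by move=> x; exact: Hb.
- exact: (lg_fun scDl sc1 p_hom lG (hu _)).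
Qed.

End RealHB2.

End chunk2.

Section chunk3.
Import Order.TTheory GRing.Theory Num.Theory.
Local Open Scope classical_set_scope.
Local Open Scope ring_scope.

Lemma le_eps (R : realFieldType) (a b : R) : (forall e, 0 < e -> a <= b + e) -> a <= b.
Proof.
move=> h; rewrite leNgt; apply/negP => ba.
have := h ((a - b) / 2); rewrite divr_gt0 ?subr_gt0 // => /(_ isT); lra.
Qed.

Section Minkowski.
Variables (R : realType) (V : zmodType) (sc : R -> V -> V).
Hypotheses (scD : forall a x y, sc a (x + y) = sc a x + sc a y)
  (scDl : forall a b x, sc (a + b) x = sc a x + sc b x)
  (scA : forall a b x, sc a (sc b x) = sc (a * b) x)
  (sc1 : forall x, sc 1 x = x).
Variable C : set V.
Hypotheses (Cconv : forall x x' t, C x -> C x' -> 0 <= t <= 1 ->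
                      C (sc t x + sc (1 - t) x'))
  (C0 : C 0) (Cabs : forall x, exists t, 0 < t /\ C (sc t x)).

Let S x := [set t : R | 0 < t /\ C (sc t^-1 x)].
Let p x := inf (S x).

Let S_ne x : S x !=set0.
Proof.
have [t [t0 Ct]] := Cabs x; exists t^-1; split; first by rewrite invr_gt0.
by rewrite invrK.
Qed.

Let S_lb x : has_lbound (S x).
Proof. by exists 0 => t [t0 _]; exact: ltW. Qed.

Let S_up x t t' : S x t -> t <= t' -> S x t'.
Proof.
move=> [t0 Ct] tt'; have t'0 : 0 < t' by exact: lt_le_trans tt'.
split=> //.
have := Cconv (t := t / t') Ct C0; rewrite (scx0 scDl scA) addr0 scA.
rewrite mulrAC mulrV ?unitfE ?lt0r_neq0 // mul1r; apply.
apply/andP; split; first by apply: divr_ge0; exact: ltW.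
by rewrite ler_pdivrMr // mul1r.
Qed.

Let p_lb x t : S x t -> p x <= t.
Proof. by move=> St; apply: ge_inf. Qed.

Let p_in x t : p x < t -> S x t.
Proof.
by move=> /(inf_lt (S_ne x)) [s Ss st]; apply: S_up Ss (ltW st).
Qed.

Let p_ge0 x : 0 <= p x.
Proof. by apply: lb_le_inf => // t [t0 _]; exact: ltW. Qed.

Let p_sub x y : p (x + y) <= p x + p y.
Proof.
apply: le_eps => e e0.
have [s0 Cs] := p_in (ltr_pwDr (divr_gt0 e0 (ltr0n _ 2)) (lexx (p x))).
have [s'0 Cs'] := p_in (ltr_pwDr (divr_gt0 e0 (ltr0n _ 2)) (lexx (p y))).
set s := p x + e / 2 in s0 Cs *; set s' := p y + e / 2 in s'0 Cs' *.
have ss0 : 0 < s + s' by exact: addr_gt0.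
suff : S (x + y) (s + s') by move/p_lb; rewrite /s /s'; lra.
split=> //.
have := Cconv (t := s / (s + s')) Cs Cs'.
have -> : 1 - s / (s + s') = s' / (s + s').
  by field; rewrite lt0r_neq0.
have e1 : s / (s + s') * s^-1 = (s + s')^-1.
  by field; rewrite !lt0r_neq0.
have e2 : s' / (s + s') * s'^-1 = (s + s')^-1.
  by field; rewrite !lt0r_neq0.
rewrite !scA e1 e2 -scD; apply.
apply/andP; split; first by apply: divr_ge0; exact: ltW.
rewrite ler_pdivrMr // mul1r; lra.
Qed.

Let p_hom_le a x : 0 < a -> p (sc a x) <= a * p x.
Proof.
move=> a0; apply: le_eps => e e0.
have [s0 Cs] := p_in (ltr_pwDr (divr_gt0 e0 a0) (lexx (p x))).
suff : S (sc a x) (a * (p x + e / a)).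
  by move/p_lb; rewrite mulrDr mulrCA mulrV ?unitfE ?lt0r_neq0 // mulr1.
split; first exact: mulr_gt0.
rewrite scA; have -> : (a * (p x + e / a))^-1 * a = (p x + e / a)^-1.
  by rewrite invfM mulrAC mulVf ?lt0r_neq0 // mul1r.
exact: Cs.
Qed.

Let p_hom a x : 0 <= a -> p (sc a x) = a * p x.
Proof.
rewrite le0r => /orP[/eqP ->|a0].
  rewrite mul0r (sc0 scDl); apply/eqP; rewrite eq_le p_ge0 andbT.
  apply: le_eps => e e0; rewrite add0r; apply: p_lb; split => //.
  by rewrite (scx0 scDl scA).
apply/eqP; rewrite eq_le p_hom_le //=.
have := @p_hom_le a^-1 (sc a x) (ltac:(by rewrite invr_gt0) : 0 < a^-1).
rewrite scA mulVf ?lt0r_neq0 // sc1 => h.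
by rewrite -(@ler_pM2l _ a^-1 ltac:(by rewrite invr_gt0)) mulrA mulVf ?lt0r_neq0 // mul1r.
Qed.

Lemma minkowski_sep y : ~ C y -> exists u : V -> R,
  [/\ forall t x x', u (sc t x + x') = t * u x + u x',
      forall c, C c -> u c <= 1 & 1 <= u y].
Proof.
move=> nCy.
have [u [ul up uy]] := real_HB scD scDl scA sc1 p_sub p_hom y.
exists u; split => //.
- move=> c Cc; apply: le_trans (up c) _; apply: p_lb; split => //.
  by rewrite invr1 sc1.
- rewrite uy leNgt; apply/negP => /p_in [_]; rewrite invr1 sc1; exact: nCy.
Qed.

End Minkowski.

End chunk3.

Section chunk4.
Import Order.TTheory GRing.Theory Num.Theory.
Local Open Scope classical_set_scope.
Local Open Scope ring_scope.

Lemma ghb_R (R : realType) (E : lmodType R) (C : set E) :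
  (forall x x' t, C x -> C x' -> 0 <= t <= 1 -> C (t *: x + (1 - t) *: x')) ->
  (forall l c, `|l| <= 1 -> C c -> C (l *: c)) ->
  (forall x, exists t, 0 < t /\ C (t *: x)) -> C 0 ->
  forall y, ~ C y -> exists f : E -> R,
   [/\ forall a x x', f (a *: x + x') = a * f x + f x',
       forall c, C c -> `|f c| <= 1 & 1 <= `|f y|].
Proof.
move=> Cconv Cbal Cabs C0 y nCy.
have [u [ul uC uy]] := minkowski_sep (@scalerDr R E) (fun a b x => scalerDl x a b)
  (@scalerA R E) (@scale1r R E) Cconv C0 Cabs nCy.
have u0 : u 0 = 0.
  by have := ul 1 0 0; rewrite scale1r addr0 mul1r ; lra.
exists u; split => //.
- move=> c Cc; rewrite ler_norml uC // andbT.
  have := uC _ (Cbal (-1) c ltac:(by rewrite normrN normr1) Cc).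
  by have := ul (-1) c 0; rewrite addr0 u0 addr0 => ->; lra.
- by apply: le_trans uy (ler_norm _).
Qed.

Local Open Scope complex_scope.

Lemma ghb_C (R : realType) (E : lmodType R[i]) (C : set E) :
  (forall x x' (t : R), C x -> C x' -> 0 <= t <= 1 ->
     C (t%:C *: x + (1 - t)%:C *: x')) ->
  (forall l c, `|l| <= 1 -> C c -> C (l *: c)) ->
  (forall x, exists t : R, 0 < t /\ C (t%:C *: x)) -> C 0 ->
  forall y, ~ C y -> exists f : E -> R[i],
   [/\ forall a x x', f (a *: x + x') = a * f x + f x',
       forall c, C c -> `|f c| <= 1 & 1 <= `|f y|].
Proof.
move=> Cconv Cbal Cabs C0 y nCy.
pose sc (t : R) (x : E) := t%:C *: x.
have scD a x x' : sc a (x + x') = sc a x + sc a x' by rewrite /sc scalerDr.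
have scDl a b x : sc (a + b) x = sc a x + sc b x by rewrite /sc rmorphD scalerDl.
have scA a b x : sc a (sc b x) = sc (a * b) x by rewrite /sc scalerA rmorphM.
have sc1 x : sc 1 x = x by rewrite /sc rmorph1 scale1r.
have Cconv' x x' t : C x -> C x' -> 0 <= t <= 1 -> C (sc t x + sc (1 - t) x').
  exact: Cconv.
have [u [ul uC uy]] := minkowski_sep scD scDl scA sc1 Cconv' C0 Cabs nCy.
have u0 : u 0 = 0.
  by have := ul 1 0 0; rewrite sc1 addr0 mul1r ; lra.
have uD x x' : u (x + x') = u x + u x'.
  by have := ul 1 x x'; rewrite sc1 mul1r.
have uZ t x : u (t%:C *: x) = t * u x.
  by have := ul t x 0; rewrite addr0 u0 addr0.
pose f x := (u x)%:C - 'i * (u ('i *: x))%:C.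
have fRe x : complex.Re (f x) = u x by rewrite /f; simpc.
have fD x x' : f (x + x') = f x + f x'.
  rewrite /f scalerDr !uD !rmorphD /=; ring.
have fZ a x : f (a *: x) = a * f x.
  case: a => r s.
  have e1 : (r +i* s) *: x = r%:C *: x + s%:C *: ('i *: x).
    by rewrite [r +i* s]complexE /= scalerDl scalerA mulrC.
  have e2 : 'i *: ((r +i* s) *: x) = r%:C *: ('i *: x) - s%:C *: x.
    rewrite e1 scalerDr !scalerA [_ * s%:C]mulrC -mulrA.
    have -> : 'i * 'i = -1 :> R[i] by rewrite -expr2 sqr_i.
    by rewrite mulrN1 scaleNr mulrC.
  rewrite /f e2 e1 uD !uZ -scaleNr -rmorphN uD !uZ.
  move: (u x) (u ('i *: x)) => p q.
  simpc; congr (_ +i* _); ring.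
exists f; split.
- by move=> a x x'; rewrite fD fZ.
- move=> c Cc.
  have [->|z0] := eqVneq (f c) 0; first by rewrite normr0 ler01.
  pose w := (f c)^* / `|f c|.
  have nz : `|f c| != 0 by rewrite normr_eq0.
  have wn : `|w| = 1.
    by rewrite /w normrM normcJ normfV normr_id mulfV.
  have Cw := Cbal w c (ltac:(by rewrite wn) : `|w| <= 1) Cc.
  have fw : f (w *: c) = `|f c|.
    rewrite fZ /w mulrAC [_^* * _]mulrC -sqr_normc expr2 mulrK //.
  have := uC _ Cw; rewrite -fRe fw normc_def /= => h.
  by rewrite -(rmorph1 (real_complex R)) lecR.
- apply: le_trans (normc_ge_Re (f y)).
  rewrite fRe -(rmorph1 (real_complex R)) lecR.
  exact: le_trans uy (ler_norm _).
Qed.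

End chunk4.

Section chunk5.
Import Order.TTheory GRing.Theory Num.Theory.
Local Open Scope classical_set_scope.
Local Open Scope ring_scope.
Local Open Scope complex_scope.

Lemma GHB (R : realType) (b : bool) (E : tvsType (RC R b)) (C : set E) :
  @convex_set (RC R b) E C -> balanced C -> absorbing C -> forall y, ~ C y ->
  exists f : E -> RC R b,
   [/\ forall a x x', f (a *: x + x') = a * f x + f x',
       forall c, C c -> `|f c| <= 1 & 1 <= `|f y|].
Proof.
move=> Cconv Cbal Cabs y nCy.
have Cbal' l c : `|l| <= 1 -> C c -> C (l *: c).
  by move=> l1 Cc; apply: (Cbal l l1); exists c.
have C0 : C 0.
  have [r r0 /(_ r (ltac:(by rewrite gtr0_norm)) 0 erefl) [u Cu _]] := Cabs 0.
  by have := Cbal' 0 u; rewrite normr0 scale0r; apply.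
case: b E C Cconv Cbal Cabs y nCy Cbal' C0 => E C Cconv Cbal Cabs y nCy Cbal' C0.
- apply: (@ghb_R R E C) => //.
  + move=> x x' t Cx Cx' /andP[t0 t1].
    have := Cconv x x' (Itv01 t0 t1) (mem_set Cx) (mem_set Cx').
    by rewrite inE.
  + move=> x; have [r r0 /(_ r) h] := Cabs x.
    have [u Cu ux] := h (ltac:(by rewrite gtr0_norm)) x erefl.
    exists r^-1; split; first by rewrite invr_gt0.
    by rewrite -ux scalerA mulVf ?lt0r_neq0 // scale1r.
- apply: (@ghb_C R E C) => //.
  + move=> x x' t Cx Cx' /andP[t0 t1].
    have t0' : (0 : R[i]) <= t%:C by rewrite ler0c.
    have t1' : (t%:C : R[i]) <= 1 by rewrite -(rmorph1 (real_complex R)) lecR.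
    have := Cconv x x' (Itv01 t0' t1') (mem_set Cx) (mem_set Cx').
    by rewrite inE /= rmorphB rmorph1.
  + move=> x; have [r r0 /(_ r) h] := Cabs x.
    have [u Cu ux] := h (ltac:(by rewrite gtr0_norm)) x erefl.
    have r0' : (0 : R[i]) < r by [].
    move: r0'; rewrite ltcE /= => /andP[/eqP imr rer].
    exists (complex.Re r)^-1; split; first by rewrite invr_gt0.
    rewrite -ux scalerA.
    have -> : ((complex.Re r)^-1)%:C * r = 1.
      move: (r : R[i]) imr rer => [a c] /= -> a0.
      by simpc; rewrite mulVf ?lt0r_neq0 // mulr0 subr0 mul0r addr0.
    by rewrite scale1r.
Qed.

End chunk5.

Section chunk6.
Import numFieldNormedType.Exports.
Import Order.TTheory GRing.Theory Num.Theory.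
Local Open Scope classical_set_scope.
Local Open Scope ring_scope.

Section tvs_facts.
Context {K : numFieldType}.

Lemma normV_lt (l d : K) : 0 < d -> d^-1 < `|l| -> `|l^-1| < d.
Proof.
move=> d0 h; have l0 : 0 < `|l| := lt_trans (ltac:(by rewrite invr_gt0) : 0 < d^-1) h.
by rewrite normfV -[d]invrK ltf_pV2 // posrE ?invr_gt0.
Qed.

Lemma normV_le (l d : K) : 0 < d -> d^-1 <= `|l| -> `|l^-1| <= d.
Proof.
move=> d0 h; have l0 : 0 < `|l| := lt_le_trans (ltac:(by rewrite invr_gt0) : 0 < d^-1) h.
by rewrite normfV -[d]invrK lef_pV2 // posrE ?invr_gt0.
Qed.

Lemma absorb_pt (E : tvsType K) (U : set E) (x : E) :
  nbhs 0 U -> absorbs U [set x].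
Proof.
move=> U0; have /= := scale_continuous (0, x) U.
rewrite scale0r => /(_ U0)[]/= B [B1 B2] BU.
have [d /= d0 hd] := (nbhs_ballP _ _).1 B1.
exists (d^-1 + d^-1); first by rewrite addr_gt0 // invr_gt0.
move=> l hl _ ->.
have dl : d^-1 < `|l| by apply: lt_le_trans hl; rewrite ltrDl invr_gt0.
have l0 : l != 0.
  by rewrite -normr_eq0; apply: lt0r_neq0; apply: lt_trans dl; rewrite invr_gt0.
exists (l^-1 *: x); last by rewrite scalerA mulfV // scale1r.
apply: (BU (l^-1, x)); split => /=; last exact: nbhs_singleton.
apply: hd; rewrite /ball /= sub0r normrN; exact: normV_lt.
Qed.

Lemma bounded_pt (E : tvsType K) (x : E) : tvs_bounded [set x].
Proof. by move=> U U0; exact: absorb_pt. Qed.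

Lemma lin0 (E : tvsType K) (f : E -> K) :
  (forall a x x', f (a *: x + x') = a * f x + f x') -> f 0 = 0.
Proof.
move=> fl; have := fl 1 0 0; rewrite scale1r addr0 mul1r => h.
by apply: (@addrI _ (f 0)); rewrite addr0 -h.
Qed.

Lemma linD (E : tvsType K) (f : E -> K) :
  (forall a x x', f (a *: x + x') = a * f x + f x') -> forall x x', f (x + x') = f x + f x'.
Proof. by move=> fl x x'; have := fl 1 x x'; rewrite scale1r mul1r. Qed.

Lemma linZ (E : tvsType K) (f : E -> K) :
  (forall a x x', f (a *: x + x') = a * f x + f x') -> forall a x, f (a *: x) = a * f x.
Proof. by move=> fl a x; have := fl a x 0; rewrite addr0 (lin0 fl) addr0. Qed.

Lemma linB (E : tvsType K) (f : E -> K) :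
  (forall a x x', f (a *: x + x') = a * f x + f x') -> forall x x', f (x - x') = f x - f x'.
Proof.
move=> fl x x'; rewrite -scaleN1r addrC (fl (-1) x' x) mulN1r addrC //.
Qed.

Lemma cont_of_bounded (E : tvsType K) (C : set E) (f : E -> K) :
  nbhs 0 C -> (forall a x x', f (a *: x + x') = a * f x + f x') ->
  (forall c, C c -> `|f c| <= 1) -> continuous f.
Proof.
move=> C0 fl fC x0; apply/cvgrPdist_lt => e e0.
have e20 : e / 2 != 0 by rewrite mulf_neq0 ?lt0r_neq0 // invr_neq0 // pnatr_eq0.
apply: filterS (nbhsT x0 (nbhs0Z e20 C0)) => _ [_ [c Cc <-] <-].
rewrite (linD fl) (linZ fl) opprD addrA subrr sub0r normrN normrM.
have e2 : 0 < e / 2 by rewrite divr_gt0.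
rewrite gtr0_norm //; apply: le_lt_trans (ler_piMr (ltW e2) (fC _ Cc)) _.
by rewrite ltr_pdivrMr // ltr_pMr // ltr1n.
Qed.

End tvs_facts.

End chunk6.

Section chunk7.
Import numFieldNormedType.Exports.
Import Order.TTheory GRing.Theory Num.Theory.
Local Open Scope classical_set_scope.
Local Open Scope ring_scope.
Local Open Scope convex_scope.

Lemma convE {K : numFieldType} (E : lmodType K) (x y : convex_lmodType E) (t : {i01 K}) :
  x <| t |> y = t%:num *: x + (1 - t%:num) *: y.
Proof. by []. Qed.

Lemma cb_nbhs {K : numFieldType} (E : tvsType K) (U : set E) : nbhs 0 U ->
  exists C : set E, [/\ nbhs 0 C, C `<=` U, @convex_set K E C & balanced C].
Proof.
move=> U0.
have [Bs Bconv [Bop Bb]] := @locally_convex K E.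
have [Ob [BO O0] OU] := Bb 0 U U0.
have Oop : open Ob by exact: Bop.
have Ocv : @convex_set K E Ob by apply: Bconv; rewrite inE.
pose C := [set x : E | forall l : K, `|l| <= 1 -> Ob (l *: x)].
exists C; split.
- have /= := scale_continuous (0, 0) Ob.
  rewrite scale0r => /(_ (open_nbhs_nbhs (conj Oop O0)))[]/= B [B1 B2] BU.
  have [d /= d0 hd] := (nbhs_ballP _ _).1 B1.
  have d20 : d / 2 != 0 by rewrite mulf_neq0 ?lt0r_neq0 // invr_neq0 // pnatr_eq0.
  apply: filterS (nbhs0Z d20 B2) => _ [a Ba <-] l l1.
  rewrite scalerA; apply: (BU (l * (d / 2), a)); split => //=.
  apply: hd; rewrite /ball /= sub0r normrN normrM.
  apply: le_lt_trans (ler_piMl (normr_ge0 _) l1) _.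
  rewrite gtr0_norm ?divr_gt0 // ltr_pdivrMr // ltr_pMr // ltr1n //.
- by move=> x /(_ 1); rewrite normr1 scale1r => /(_ (lexx _)); exact: OU.
- move=> x y t /[!inE] Cx Cy l l1; rewrite convE scalerDr !scalerA.
  rewrite [l * _]mulrC [l * (1 - _)]mulrC -!scalerA.
  have := Ocv (l *: x) (l *: y) t; rewrite !inE convE; apply.
  + exact: Cx.
  + exact: Cy.
- move=> l l1 _ [x Cx <-] l' l'1; rewrite scalerA; apply: Cx.
  by rewrite normrM; apply: le_trans (ler_piMr (normr_ge0 _) l1) _.
Qed.

End chunk7.

Section chunk8.
Import numFieldNormedType.Exports.
Import Order.TTheory GRing.Theory Num.Theory.
Local Open Scope classical_set_scope.
Local Open Scope ring_scope.

Lemma main_aux (R : realType) (b : bool)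
    (X Y : tvsType (RC R b)) (phi : X -> (Y -> RC R b)) :
  hausdorff_space X -> hausdorff_space Y ->
  top_iso_dual phi ->
  quasi_barrelled Y ->
  top_iso_onto_range (fun (y : Y) (x : X) => phi x y).
Proof.
move=> hX hY [[phicl philin phiinj phicont phiopen] phisurj] qb.
have phi0 z : phi 0 z = 0.
  have := philin 1 0 0 z; rewrite scale1r addr0 mul1r => h.
  by apply: (@addrI _ (phi 0 z)); rewrite addr0 -h.
have phi0f : phi 0 = (fun _ => 0) by apply/funext => z; exact: phi0.
have phiZ a x z : phi (a *: x) z = a * phi x z.
  by have := philin a x 0 z; rewrite addr0 phi0 addr0.
have e2gt0 (e : RC R b) : 0 < e -> 0 < e / 2 by move=> e0; rewrite divr_gt0.
have e2lt (e : RC R b) : 0 < e -> e / 2 < e.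
  by move=> e0; rewrite ltr_pdivrMr // ltr_pMr // ltr1n.
have P1 : forall y, cont_linear (fun x => phi x y).
  move=> y; split; first by move=> a x x'; exact: philin.
  move=> x0; apply/cvgrPdist_lt => e e0.
  pose S := [set g : Y -> RC R b | cont_linear g /\ `|g y - phi x0 y| < e].
  have So : strong_open S.
    split; first by move=> g [].
    move=> f [fcl fe]; exists [set y]; split; first exact: bounded_pt.
    exists (e - `|f y - phi x0 y|); first by rewrite subr_gt0.
    move=> g [gcl /(_ y erefl) hg]; split => //.
    rewrite -(subrK (f y) (g y)) -addrA; apply: le_lt_trans (ler_normD _ _) _.
    by rewrite -ltrBrDr.
  have : nbhs x0 (phi @^-1` S).
    apply: open_nbhs_nbhs; split; first exact: phicont.
    by split; [exact: phicl|rewrite subrr normr0].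
  by apply: filterS => x [_ h]; rewrite distrC.
have K5 : forall W : set Y, nbhs 0 W -> exists B : set X, tvs_bounded B /\
    forall d, (forall x, B x -> `|phi x d| < 1) -> W d.
  move=> W W0; have [C [C0 CW Ccv Cbal]] := cb_nbhs W0.
  have Cabs : absorbing C by move=> x; exact: absorb_pt.
  pose B := [set x : X | forall c, C c -> `|phi x c| <= 1].
  exists B; split; last first.
    move=> d hd; apply: CW; apply: contrapT => nCd.
    have [f [fl fC fd]] := GHB Ccv Cbal Cabs nCd.
    have fc := cont_of_bounded C0 fl fC.
    have [x ex] := phisurj f (conj fl fc).
    have h : `|f d| < 1 by rewrite -ex; apply: hd => c Cc; rewrite ex; exact: fC.
    by have := lt_le_trans h fd; rewrite ltxx.
  move=> N N0; rewrite nbhsE in N0; case: N0 => N' [N'o N'0] N'N.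
  have [V' [V'o eq]] := phiopen N' N'o.
  have V'0 : V' (phi 0).
    have : (phi @` N') (phi 0) by exists 0.
    by rewrite eq => -[].
  have [A [Ab [e e0 hA]]] := V'o.2 _ V'0.
  have [r r0 hr] := Ab C C0.
  have hr' : forall a, A a -> exists2 c, C c & a = r *: c.
    move=> a Aa; have [c Cc ca] := hr r (ltac:(by rewrite gtr0_norm)) a Aa.
    by exists c.
  have r20 : 0 < e / (2 * r) by rewrite divr_gt0 // mulr_gt0.
  exists (e / (2 * r))^-1; first by rewrite invr_gt0.
  move=> l hl x Bx.
  have hl' := normV_le r20 hl.
  have l0 : l != 0.
    apply/negP => /eqP l0; move: hl; rewrite l0 normr0 lt_geF //.
    by rewrite invr_gt0.
  have : (V' `&` range phi) (phi (l^-1 *: x)).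
    split; last by exists (l^-1 *: x).
    apply: hA; split; first exact: phicl.
    move=> a Aa; rewrite phi0 subr0 phiZ normrM.
    have [c Cc ->] := hr' a Aa.
    rewrite (linZ (phicl x).1) normrM (gtr0_norm r0).
    apply: le_lt_trans (e2lt _ e0).
    apply: le_trans (ler_wpM2r (mulr_ge0 (ltW r0) (normr_ge0 _)) hl') _.
    have -> : e / (2 * r) * (r * `|phi x c|) = e / 2 * `|phi x c|.
      by rewrite invfM -!mulrA mulKf ?lt0r_neq0.
    by apply: ler_piMr; [exact: ltW (e2gt0 _ e0)|exact: Bx _ Cc].
  rewrite -eq => -[n N'n /phiinj en].
  exists n; first exact: N'N.
  by rewrite en scalerA mulfV // scale1r.
split.
- exact: P1.
- by move=> a y y' x; exact: (phicl x).1.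
- move=> y1 y2 e12; apply: contrapT => ne.
  have [U [U0 nUd]] : exists U : set Y, nbhs 0 U /\ ~ U (y1 - y2).
    apply: contrapT => nex; apply: ne.
    have : cluster (nbhs (0 : Y)) (y1 - y2).
      move=> A B' A0 Bd; exists (y1 - y2); split; last exact: nbhs_singleton.
      by apply: contrapT => nA; apply: nex; exists A.
    by move/hY => h; apply/eqP; rewrite -subr_eq0 -h.
  have [C [C0 CU Ccv Cbal]] := cb_nbhs U0.
  have Cabs : absorbing C by move=> x; exact: absorb_pt.
  have nCd : ~ C (y1 - y2) by move=> /CU.
  have [f [fl fC fd]] := GHB Ccv Cbal Cabs nCd.
  have fc := cont_of_bounded C0 fl fC.
  have [x ex] := phisurj f (conj fl fc).
  have h : phi x y1 = phi x y2 by have := congr1 (fun g => g x) e12.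
  by move: fd; rewrite -ex (linB (phicl x).1) h subrr normr0 ler10.
- move=> V [Vcl Vopen]; rewrite openE => y0 Vy0; rewrite /interior.
  have [B [Bb [e e0 hball]]] := Vopen _ Vy0.
  pose D := [set y : Y | forall x, B x -> `|phi x y| <= e / 2].
  have bound : forall A : set Y, tvs_bounded A -> exists2 M : RC R b, 0 < M &
      forall x a, B x -> A a -> `|phi x a| <= M.
    move=> A Ab.
    pose S := [set g : Y -> RC R b | cont_linear g /\
      exists2 s : RC R b, s < 1 & forall a, A a -> `|g a| <= s].
    have So : strong_open S.
      split; first by move=> g [].
      move=> f [fcl [s s1 fs]]; exists A; split => //.
      have s20 : 0 < (1 - s) / 2 by rewrite divr_gt0 // subr_gt0.
      exists ((1 - s) / 2) => // g [gcl hg]; split => //.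
      exists (s + (1 - s) / 2).
        rewrite -subr_gt0; have -> : 1 - (s + (1 - s) / 2) = (1 - s) / 2.
          by rewrite opprD addrA {1}(splitr (1 - s)) addrK.
        exact: s20.
      move=> a Aa; rewrite -(subrK (f a) (g a)) addrC.
      apply: le_trans (ler_normD _ _) _.
      by apply: lerD; [exact: fs|exact: ltW (hg a Aa)].
    have S0 : nbhs 0 (phi @^-1` S).
      apply: open_nbhs_nbhs; split; first exact: phicont.
      split; first exact: phicl.
      by exists 0; [exact: ltr01|move=> a _; rewrite phi0 normr0].
    have [r r0 hr] := Bb _ S0.
    exists r => // x a Bx Aa.
    have [n [ncl [s s1 ns]] <-] := hr r (ltac:(by rewrite gtr0_norm)) x Bx.
    rewrite phiZ normrM (gtr0_norm r0); apply: ler_piMr; first exact: ltW.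
    exact: le_trans (ns a Aa) (ltW s1).
  have borni : bornivorous D.
    move=> A Ab; have [M M0 hM] := bound A Ab.
    have d0 : 0 < e / 2 / M by rewrite !divr_gt0.
    exists (e / 2 / M)^-1; first by rewrite invr_gt0.
    move=> l hl a Aa.
    have hl' := normV_le d0 hl.
    have l0 : l != 0.
      apply/negP => /eqP l0; move: hl; rewrite l0 normr0 lt_geF //.
      by rewrite invr_gt0.
    exists (l^-1 *: a); last by rewrite scalerA mulfV // scale1r.
    move=> x Bx; rewrite (linZ (phicl x).1) normrM.
    apply: le_trans (ler_wpM2l (normr_ge0 _) (hM x a Bx Aa)) _.
    apply: le_trans (ler_wpM2r (ltW M0) hl') _.
    by rewrite divfK ?lt0r_neq0.
  have barD : barrel D.
    split.
    + move=> y cly x Bx; apply/ler_addgt0Pr => eps eps0.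
      have hn : \forall t \near y, `|phi x y - phi x t| < eps.
        by move: ((phicl x).2 y) => /cvgrPdist_lt; apply.
      have [z [Dz hz]] := cly _ hn.
      rewrite -(subrK (phi x z) (phi x y)); apply: le_trans (ler_normD _ _) _.
      by rewrite addrC; apply: lerD; [exact: Dz|exact: ltW].
    + split.
      * move=> y1 y2 t /[!inE] D1 D2 x Bx.
        rewrite convE (linD (phicl x).1) !(linZ (phicl x).1).
        apply: le_trans (ler_normD _ _) _; rewrite !normrM.
        rewrite (@ger0_norm _ t%:num) // (@ger0_norm _ (1 - t%:num)); last first.
          by rewrite subr_ge0.
        have -> : e / 2 = t%:num * (e / 2) + (1 - t%:num) * (e / 2).
          by rewrite -mulrDl addrC subrK mul1r.
        apply: lerD; apply: ler_wpM2l; rewrite ?subr_ge0 //; [exact: D1|exact: D2].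
      * move=> l l1 _ [y Dy <-] x Bx; rewrite (linZ (phicl x).1) normrM.
        by apply: le_trans (ler_piMl (normr_ge0 _) l1) _; exact: Dy.
    + by move=> y; apply: borni; exact: bounded_pt.
  have D0 := qb D barD borni.
  apply: filterS (nbhsT y0 D0) => _ [d Dd <-].
  apply: hball; split; first exact: P1.
  move=> x Bx; rewrite /= (linD (phicl x).1) addrAC subrr add0r.
  exact: le_lt_trans (Dd x Bx) (e2lt _ e0).
- move=> U Uo.
  pose Phi := fun (y : Y) (x : X) => phi x y.
  pose V := [set g : X -> RC R b | cont_linear g /\ exists B : set X,
    tvs_bounded B /\ exists2 e : RC R b, 0 < e & forall h, cont_linear h ->
      (forall x, B x -> `|h x - g x| < e) -> range Phi h -> (Phi @` U) h].
  exists V; split.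
    split; first by move=> g [].
    move=> g [gcl [B [Bb [e e0 hg]]]]; exists B; split => //.
    exists (e / 2); first exact: e2gt0.
    move=> g' [g'cl hg']; split => //; exists B; split => //.
    exists (e / 2); first exact: e2gt0.
    move=> h hcl hh hr; apply: hg => // x Bx.
    rewrite -(subrK (g' x) (h x)) -addrA; apply: le_lt_trans (ler_normD _ _) _.
    by rewrite [e]splitr; apply: ltrD; [exact: hh|exact: hg'].
  apply/seteqP; split.
    move=> _ [y0 Uy0 <-]; split; last by exists y0.
    split; first exact: P1.
    have W0 : nbhs (0 : Y) [set d | U (y0 + d)].
      have := nbhsB (- y0) (open_nbhs_nbhs (conj Uo Uy0)).
      rewrite addNr; apply: filterS => _ [u Uu <-].
      by rewrite /= addrA subrr add0r.
    have [B [Bb HB]] := K5 _ W0.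
    exists B; split => //; exists 1; first exact: ltr01.
    move=> h hcl hh [y _ ey]; exists y => //.
    suff : U (y0 + (y - y0)) by rewrite addrC subrK.
    apply: HB => x Bx.
    rewrite (linB (phicl x).1).
    by have := hh x Bx; rewrite -ey.
  move=> g [[gcl [B [Bb [e e0 hg]]]] gr]; apply: hg => // x _.
  by rewrite subrr normr0.
Qed.
End chunk8.

Theorem proposition2p2 (R : realType) (b : bool)
    (X Y : tvsType (RC R b)) (phi : X -> (Y -> RC R b)) :
  hausdorff_space X -> hausdorff_space Y ->
  top_iso_dual phi ->
  quasi_barrelled Y ->
  top_iso_onto_range (fun (y : Y) (x : X) => phi x y).
Proof. exact: main_aux. Qed.
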